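(* Let $R$ be one of the chain rings $\mathbb{G}_4=\mathbb{Z}_4[X]/(X^2+X+1)$, $\mathbb{S}_4=\mathbb{F}_4[X]/(X^2)$, $\mathbb{T}_4=\mathbb{F}_4[X;a\mapsto a^2]/(X^2)$. Then there exist projective arcs with parameters $(120,8)$, $(140,9)$ and $(152,10)$ in $\mathrm{PHG}(2,R)$.
   Context: $\mathbb{F}_4[X;a\mapsto a^2]$ denotes the skew polynomial ring with commutation rule $Xa=a^2X$. For a finite chain ring $R$ of length $2$ with residue field $\mathbb{F}_q$, the projective Hjelmslev plane $\mathrm{PHG}(2,R)$ is the incidence structure whose points are the free rank-$1$ submodules of the right module $R_R^3$, whose lines are the free rank-$2$ submodules of $R_R^3$, with incidence given by inclusion. A projective $(k,n)$-arc is a set of $k$ points meeting every line in at most $n$ points. *)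

(* Defs.v *)
From HB Require Import structures.
From mathcomp Require Import all_boot all_order all_algebra.
From mathcomp Require Import ring.

Set Implicit Arguments.
Unset Strict Implicit.
Unset Printing Implicit Defensive.

Import GRing.Theory.
Local Open Scope ring_scope.

(* An element (a, b) stands for a + b*xi, where xi^2 = -xi - 1.        *)
Definition G4 : Type := ('Z_4 * 'Z_4)%type.
HB.instance Definition _ := Finite.on G4.
HB.instance Definition _ := GRing.Zmodule.on G4.

Definition G4_one : G4 := (1, 0).
Definition G4_mul (x y : G4) : G4 :=
  (x.1 * y.1 - x.2 * y.2, x.1 * y.2 + x.2 * y.1 - x.2 * y.2).

Lemma G4_mulA : associative G4_mul.
Proof. by move=> [a b] [c d] [e f]; rewrite /G4_mul; apply: injective_projections => /=; ring. Qed.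
Lemma G4_mul1r : left_id G4_one G4_mul.
Proof. by move=> [a b]; rewrite /G4_mul; apply: injective_projections => /=; ring. Qed.
Lemma G4_mulr1 : right_id G4_one G4_mul.
Proof. by move=> [a b]; rewrite /G4_mul; apply: injective_projections => /=; ring. Qed.
Lemma G4_mulDl : left_distributive G4_mul +%R.
Proof. by move=> [a b] [c d] [e f]; rewrite /G4_mul; apply: injective_projections => /=; ring. Qed.
Lemma G4_mulDr : right_distributive G4_mul +%R.
Proof. by move=> [a b] [c d] [e f]; rewrite /G4_mul; apply: injective_projections => /=; ring. Qed.
Lemma G4_one_neq0 : G4_one != 0.
Proof. by []. Qed.

HB.instance Definition _ := GRing.Zmodule_isNzRing.Build G4
  G4_mulA G4_mul1r G4_mulr1 G4_mulDl G4_mulDr G4_one_neq0.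

(* The field F4 = F_2[X]/(X^2+X+1): (a, b) stands for a + b*w,         *)
(* w^2 = w + 1.                                                        *)
Definition F4 : Type := ('F_2 * 'F_2)%type.
HB.instance Definition _ := Finite.on F4.
HB.instance Definition _ := GRing.Zmodule.on F4.

Definition F4_one : F4 := (1, 0).
Definition F4_mul (x y : F4) : F4 :=
  (x.1 * y.1 + x.2 * y.2, x.1 * y.2 + x.2 * y.1 + x.2 * y.2).

Lemma F4_mulA : associative F4_mul.
Proof. by move=> [a b] [c d] [e f]; rewrite /F4_mul; apply: injective_projections => /=; ring. Qed.
Lemma F4_mulC : commutative F4_mul.
Proof. by move=> [a b] [c d]; rewrite /F4_mul; apply: injective_projections => /=; ring. Qed.
Lemma F4_mul1r : left_id F4_one F4_mul.
Proof. by move=> [a b]; rewrite /F4_mul; apply: injective_projections => /=; ring. Qed.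
Lemma F4_mulDl : left_distributive F4_mul +%R.
Proof. by move=> [a b] [c d] [e f]; rewrite /F4_mul; apply: injective_projections => /=; ring. Qed.
Lemma F4_one_neq0 : F4_one != 0.
Proof. by []. Qed.

HB.instance Definition _ := GRing.Zmodule_isComNzRing.Build F4
  F4_mulA F4_mulC F4_mul1r F4_mulDl F4_one_neq0.

Lemma F4_char2 : (1 + 1 : F4) = 0.
Proof. by apply/eqP. Qed.

Lemma F4_sqrD (c e : F4) : (c + e) * (c + e) = c * c + e * e.
Proof.
have h : c * e + c * e = 0.
  by rewrite -mulr2n -mulr_natl mulr2n F4_char2 mul0r.
by transitivity (c * c + e * e + (c * e + c * e)); [ring | rewrite h addr0].
Qed.

(* S4 = F4[X]/(X^2): (a, b) stands for a + b X, X central.             *)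
Definition S4 : Type := (F4 * F4)%type.
HB.instance Definition _ := Finite.on S4.
HB.instance Definition _ := GRing.Zmodule.on S4.

Definition S4_one : S4 := (1, 0).
Definition S4_mul (x y : S4) : S4 := (x.1 * y.1, x.1 * y.2 + x.2 * y.1).

Lemma S4_mulA : associative S4_mul.
Proof. by move=> [a b] [c d] [e f]; rewrite /S4_mul; apply: injective_projections => /=; ring. Qed.
Lemma S4_mulC : commutative S4_mul.
Proof. by move=> [a b] [c d]; rewrite /S4_mul; apply: injective_projections => /=; ring. Qed.
Lemma S4_mul1r : left_id S4_one S4_mul.
Proof. by move=> [a b]; rewrite /S4_mul; apply: injective_projections => /=; ring. Qed.
Lemma S4_mulDl : left_distributive S4_mul +%R.
Proof. by move=> [a b] [c d] [e f]; rewrite /S4_mul; apply: injective_projections => /=; ring. Qed.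
Lemma S4_one_neq0 : S4_one != 0.
Proof. by apply/eqP => -[/eqP]; rewrite oner_eq0. Qed.

HB.instance Definition _ := GRing.Zmodule_isComNzRing.Build S4
  S4_mulA S4_mulC S4_mul1r S4_mulDl S4_one_neq0.

(* T4 = F4[X; a |-> a^2]/(X^2): (a, b) stands for a + b X, with the    *)
(* commutation rule X a = a^2 X, hence                                 *)
(*   (a + b X)(c + d X) = a c + (a d + b c^2) X.                       *)
Definition T4 : Type := (F4 * F4)%type.
HB.instance Definition _ := Finite.on T4.
HB.instance Definition _ := GRing.Zmodule.on T4.

Definition T4_one : T4 := (1, 0).
Definition T4_mul (x y : T4) : T4 :=
  (x.1 * y.1, x.1 * y.2 + x.2 * (y.1 ^+ 2)).

Lemma T4_mulA : associative T4_mul.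
Proof. by move=> [a b] [c d] [e f]; rewrite /T4_mul; apply: injective_projections => /=; ring. Qed.
Lemma T4_mul1r : left_id T4_one T4_mul.
Proof. by move=> [a b]; rewrite /T4_mul; apply: injective_projections => /=; ring. Qed.
Lemma T4_mulr1 : right_id T4_one T4_mul.
Proof. by move=> [a b]; rewrite /T4_mul; apply: injective_projections => /=; ring. Qed.
Lemma T4_mulDl : left_distributive T4_mul +%R.
Proof. by move=> [a b] [c d] [e f]; rewrite /T4_mul; apply: injective_projections => /=; ring. Qed.
Lemma T4_mulDr : right_distributive T4_mul +%R.
Proof.
move=> [a b] [c d] [e f]; rewrite /T4_mul; apply: injective_projections => /=.
  by ring.
by rewrite !expr2 F4_sqrD; ring.
Qed.
Lemma T4_one_neq0 : T4_one != 0.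
Proof. by apply/eqP => -[/eqP]; rewrite oner_eq0. Qed.

HB.instance Definition _ := GRing.Zmodule_isNzRing.Build T4
  T4_mulA T4_mul1r T4_mulr1 T4_mulDl T4_mulDr T4_one_neq0.

(* Vectors of R^3 are row vectors; R^3 is a RIGHT R-module, the scalar *)
(* acting by right multiplication on each coordinate.                   *)
Section PHG.
Variable R : finNzRingType.

Definition rscale (x : 'rV[R]_3) (r : R) : 'rV[R]_3 := \row_i (x 0 i * r).

Definition lincomb1 (x : 'rV[R]_3) (r : R) : 'rV[R]_3 := rscale x r.
Definition lincomb2 (x y : 'rV[R]_3) (rs : R * R) : 'rV[R]_3 :=
  rscale x rs.1 + rscale y rs.2.

(* S is a free rank-1 submodule of R^3_R: it has a basis {x}. *)
Definition is_point (S : {set 'rV[R]_3}) : Prop :=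
  exists x : 'rV[R]_3,
    injective (lincomb1 x) /\ S = [set lincomb1 x r | r : R].

(* S is a free rank-2 submodule of R^3_R: it has a basis {x, y}. *)
Definition is_line (S : {set 'rV[R]_3}) : Prop :=
  exists x y : 'rV[R]_3,
    injective (lincomb2 x y) /\ S = [set lincomb2 x y rs | rs : R * R].

Definition incident (P L : {set 'rV[R]_3}) : bool := P \subset L.

Definition is_proj_arc (A : {set {set 'rV[R]_3}}) (k n : nat) : Prop :=
  [/\ forall P, P \in A -> is_point P,
      #|A| = k
    & forall L, is_line L -> (#|[set P in A | incident P L]| <= n)%N].

Definition has_proj_arc (k n : nat) : Prop :=
  exists A : {set {set 'rV[R]_3}}, is_proj_arc A k n.

End PHG.

(* Main.v *)
Require Import Defs.
From HB Require Import structures.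
From mathcomp Require Import all_boot all_order all_algebra.
From mathcomp Require Import ring.
Set Implicit Arguments.
Unset Strict Implicit.
Unset Printing Implicit Defensive.
Import GRing.Theory.
Local Open Scope ring_scope.

Section Gen.
Variable R : finNzRingType.

Definition i0 : 'I_3 := @Ordinal 3 0 isT.
Definition i1 : 'I_3 := @Ordinal 3 1 isT.
Definition i2 : 'I_3 := @Ordinal 3 2 isT.

Definition trow (t : R * R * R) : 'rV[R]_3 := \row_(i < 3) [:: t.1.1; t.1.2; t.2]`_i.

Lemma trow0 t : trow t 0 i0 = t.1.1. Proof. by rewrite mxE. Qed.
Lemma trow1 t : trow t 0 i1 = t.1.2. Proof. by rewrite mxE. Qed.
Lemma trow2 t : trow t 0 i2 = t.2. Proof. by rewrite mxE. Qed.

Definition dotr (u : R * R * R) (x : 'rV[R]_3) : R :=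
  u.1.1 * x 0 i0 + u.1.2 * x 0 i1 + u.2 * x 0 i2.
Definition dot (u t : R * R * R) : R := u.1.1 * t.1.1 + u.1.2 * t.1.2 + u.2 * t.2.
Definition tscale (t : R * R * R) (r : R) : R * R * R := (t.1.1 * r, t.1.2 * r, t.2 * r).
Definition unimodR (u : R * R * R) : Prop :=
  exists w, w * u.1.1 = 1 \/ w * u.1.2 = 1 \/ w * u.2 = 1.

Lemma dotr_trow u t : dotr u (trow t) = dot u t.
Proof. by rewrite /dotr trow0 trow1 trow2. Qed.

Lemma rowP3 (x y : 'rV[R]_3) :
  x 0 i0 = y 0 i0 -> x 0 i1 = y 0 i1 -> x 0 i2 = y 0 i2 -> x = y.
Proof.
move=> h0 h1 h2; apply/matrixP => i j; rewrite [i]ord1.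
case: j => m Hm; case: m Hm => [|[|[|m]]] Hm //.
- by have -> : Ordinal Hm = i0 by apply: val_inj.
- by have -> : Ordinal Hm = i1 by apply: val_inj.
- by have -> : Ordinal Hm = i2 by apply: val_inj.
Qed.

Lemma trow_inj : injective trow.
Proof.
move=> [[a b] c] [[a' b'] c'] /= h.
have h0 := f_equal (fun m : 'rV[R]_3 => m 0 i0) h; have h1 := f_equal (fun m : 'rV[R]_3 => m 0 i1) h;
have h2 := f_equal (fun m : 'rV[R]_3 => m 0 i2) h.
by move: h0 h1 h2; rewrite !trow0 !trow1 !trow2 /= => -> -> ->.
Qed.

Lemma rscale_entry (x : 'rV[R]_3) (r : R) (j : 'I_3) : rscale x r 0 j = x 0 j * r.
Proof. by rewrite mxE. Qed.

Lemma lincomb1_trow t r : lincomb1 (trow t) r = trow (tscale t r).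
Proof. by apply: rowP3; rewrite /lincomb1 !rscale_entry ?trow0 ?trow1 ?trow2. Qed.

Lemma lincomb1_1 (x : 'rV[R]_3) : lincomb1 x 1 = x.
Proof. by apply/matrixP => i j; rewrite /lincomb1 mxE mulr1 [i]ord1. Qed.

Lemma unimod_inj t : unimodR t -> injective (lincomb1 (trow t)).
Proof.
move=> [w Hw] r r'; rewrite !lincomb1_trow => /trow_inj [h0 h1 h2].
case: Hw => [H|[H|H]].
- by rewrite -(mul1r r) -(mul1r r') -H -!mulrA h0.
- by rewrite -(mul1r r) -(mul1r r') -H -!mulrA h1.
- by rewrite -(mul1r r) -(mul1r r') -H -!mulrA h2.
Qed.

Lemma addrACA3 (a b c d e f : R) :
  a + b + (c + d) + (e + f) = a + c + e + (b + d + f).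
Proof. by rewrite (addrACA a b c d) (addrACA (a + c) (b + d) e f). Qed.

Lemma dotr_lincomb2 u (x y : 'rV[R]_3) (a b : R) :
  dotr u (lincomb2 x y (a, b)) = dotr u x * a + dotr u y * b.
Proof.
rewrite /dotr /lincomb2 /= !mxE !mulrDr !mulrDl !mulrA.
by rewrite addrACA3.
Qed.

Definition pt (x : 'rV[R]_3) : {set 'rV[R]_3} := [set lincomb1 x r | r : R].

Lemma mem_pt_self (x : 'rV[R]_3) : x \in pt x.
Proof. by apply/imsetP; exists 1 => //; rewrite lincomb1_1. Qed.

Lemma arc_crit (gR : seq (R * R * R)) (n : nat) :
  (forall t, t \in gR -> unimodR t) ->
  uniq gR ->
  (forall s t r, s \in gR -> t \in gR -> tscale s r = t -> s = t) ->
  (forall x y : 'rV[R]_3, injective (lincomb2 x y) ->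
     exists u, [/\ dotr u x = 0, dotr u y = 0 &
        leq #|[set t in gR | dot u t == 0]| n]) ->
  has_proj_arc R (size gR) n.
Proof.
move=> Hun Huniq Hdist Hline.
exists [set pt (trow t) | t in gR]; split.
- move=> P /imsetP [t tin ->]; exists (trow t); split; first exact: unimod_inj (Hun _ tin).
  by [].
- rewrite card_in_imset; first by apply/card_uniqP.
  move=> s t sin tin /= Heq.
  have : trow t \in pt (trow s) by rewrite Heq mem_pt_self.
  case/imsetP => r _; rewrite lincomb1_trow => /trow_inj Ht.
  by apply: (Hdist s t r) => //; rewrite Ht.
- move=> L [x [y [Hinj ->]]].
  have [u [Hx Hy Hc]] := Hline x y Hinj.
  apply: leq_trans Hc.
  apply: leq_trans (leq_imset_card (fun t => pt (trow t)) _).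
  apply: subset_leq_card; apply/subsetP => P; rewrite inE => /andP [/imsetP [t tin ->] Hsub].
  apply/imsetP; exists t => //; rewrite inE tin /=.
  have := subsetP Hsub _ (mem_pt_self (trow t)).
  case/imsetP => [[a b]] _ Heq.
  by rewrite -dotr_trow Heq dotr_lincomb2 Hx Hy !mul0r addr0.
Qed.

End Gen.

Definition codes := iota 0 16.

Section Code.
Variable R : finNzRingType.
Variables (dec : nat -> R) (addc mulc : nat -> nat -> nat) (zc oc : nat).

Definition bridge : bool :=
  [&& all (fun i => all (fun j => [&& (addc i j < 16)%N, (mulc i j < 16)%N,
        dec (addc i j) == dec i + dec j & dec (mulc i j) == dec i * dec j]) codes) codes,
      (zc < 16)%N, (oc < 16)%N, dec zc == 0, dec oc == 1 &
      all (fun i => all (fun j => (dec i == dec j) ==> (i == j)) codes) codes].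

Definition inr (c : nat * nat * nat) : bool := [&& (c.1.1 < 16)%N, (c.1.2 < 16)%N & (c.2 < 16)%N].
Definition decT (c : nat * nat * nat) : R * R * R := (dec c.1.1, dec c.1.2, dec c.2).
Definition dotc (u t : nat * nat * nat) : nat :=
  addc (addc (mulc u.1.1 t.1.1) (mulc u.1.2 t.1.2)) (mulc u.2 t.2).
Definition tscalec (s : nat * nat * nat) (r : nat) : nat * nat * nat :=
  (mulc s.1.1 r, mulc s.1.2 r, mulc s.2 r).
Definition unimodc (t : nat * nat * nat) : bool :=
  has (fun w => [|| mulc w t.1.1 == oc, mulc w t.1.2 == oc | mulc w t.2 == oc]) codes.

Definition arc_checks (gens : seq (nat * nat * nat)) (n : nat) : bool :=
  [&& all inr gens, all unimodc gens, uniq gens,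
      all (fun s => all (fun t => (s == t) || all (fun r => tscalec s r != t) codes) gens) gens &
      all (fun a => all (fun b => all (fun c =>
         ~~ unimodc (a, b, c) || (count (fun t => dotc (a, b, c) t == zc) gens <= n)%N)
           codes) codes) codes].

Hypothesis Hb : bridge.
Hypothesis Hsurj : forall x : R, exists2 i, (i < 16)%N & dec i = x.

Lemma mem_codes i : (i \in codes) = (i < 16)%N.
Proof. by rewrite mem_iota. Qed.

Lemma brA i j : (i < 16)%N -> (j < 16)%N ->
  [/\ (addc i j < 16)%N, (mulc i j < 16)%N, dec (addc i j) = dec i + dec j & dec (mulc i j) = dec i * dec j].
Proof.
move=> hi hj; case/and5P: Hb => /allP /(_ i) h _ _ _ _.
rewrite mem_codes in h; move/allP: (h hi) => /(_ j); rewrite mem_codes => /(_ hj).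
by case/and4P => ? ? /eqP ? /eqP ?.
Qed.

Lemma br_zc : (zc < 16)%N /\ dec zc = 0.
Proof. by case/and5P: Hb => _ ? _ /eqP ? _. Qed.
Lemma br_oc : (oc < 16)%N /\ dec oc = 1.
Proof. by case/and5P: Hb => _ _ ? _ /andP [/eqP ? _]. Qed.

Lemma dec_inj i j : (i < 16)%N -> (j < 16)%N -> dec i = dec j -> i = j.
Proof.
move=> hi hj he; case/and5P: Hb => _ _ _ _ /andP [_ /allP /(_ i)].
rewrite mem_codes => /(_ hi) /allP /(_ j); rewrite mem_codes => /(_ hj).
by rewrite he eqxx /= => /eqP.
Qed.

Lemma decT_inj c d : inr c -> inr d -> decT c = decT d -> c = d.
Proof.
move: c d => [[c1 c2] c3] [[d1 d2] d3] /and3P [/= h1 h2 h3] /and3P [/= k1 k2 k3] [e1 e2 e3].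
by rewrite (dec_inj h1 k1 e1) (dec_inj h2 k2 e2) (dec_inj h3 k3 e3).
Qed.

Lemma decT_surj (u : R * R * R) : exists2 c, inr c & decT c = u.
Proof.
move: u => [[a b] c].
have [i hi <-] := Hsurj a; have [j hj <-] := Hsurj b; have [k hk <-] := Hsurj c.
by exists (i, j, k) => //; apply/and3P.
Qed.

Lemma dotc_ok u t : inr u -> inr t -> (dotc u t < 16)%N /\ dec (dotc u t) = dot (decT u) (decT t).
Proof.
move: u t => [[u1 u2] u3] [[t1 t2] t3] /and3P [/= h1 h2 h3] /and3P [/= k1 k2 k3].
rewrite /dotc /dot /decT /=.
have [_ m1 _ e1] := brA h1 k1; have [_ m2 _ e2] := brA h2 k2; have [_ m3 _ e3] := brA h3 k3.
have [a1 _ f1 _] := brA m1 m2.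
have [a2 _ f2 _] := brA a1 m3.
by split => //; rewrite f2 f1 e1 e2 e3.
Qed.

Lemma tscalec_ok s r : inr s -> (r < 16)%N -> inr (tscalec s r) /\ decT (tscalec s r) = tscale (decT s) (dec r).
Proof.
move: s => [[s1 s2] s3] /and3P [/= h1 h2 h3] hr.
have [_ m1 _ e1] := brA h1 hr; have [_ m2 _ e2] := brA h2 hr; have [_ m3 _ e3] := brA h3 hr.
by split; [apply/and3P | rewrite /decT /tscale /= e1 e2 e3].
Qed.

Lemma unimodc_ok t : inr t -> (unimodc t <-> unimodR (decT t)).
Proof.
move: t => [[t1 t2] t3] /and3P [/= h1 h2 h3].
have [ho dO] := br_oc.
split.
- case/hasP => w; rewrite mem_codes => hw /or3P H; exists (dec w); rewrite /decT /=.
  have [_ _ _ e1] := brA hw h1; have [_ _ _ e2] := brA hw h2; have [_ _ _ e3] := brA hw h3.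
  by case: H => /eqP H; [left | right; left | right; right]; rewrite ?(e1, e2, e3) -?e1 -?e2 -?e3 H.
- move=> [w Hw]; have [w' hw' Ew] := Hsurj w; subst w; apply/hasP; exists w'; rewrite ?mem_codes //.
  have [_ m1 _ e1] := brA hw' h1; have [_ m2 _ e2] := brA hw' h2; have [_ m3 _ e3] := brA hw' h3.
  case: Hw => [H|[H|H]]; apply/or3P.
  + by constructor 1; apply/eqP; apply: dec_inj => //; rewrite e1 dO.
  + by constructor 2; apply/eqP; apply: dec_inj => //; rewrite e2 dO.
  + by constructor 3; apply/eqP; apply: dec_inj => //; rewrite e3 dO.
Qed.

Lemma arc_code (gens : seq (nat * nat * nat)) (n : nat) :
  (forall x y : 'rV[R]_3, injective (lincomb2 x y) ->
     exists u, [/\ unimodR u, dotr u x = 0 & dotr u y = 0]) ->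
  arc_checks gens n -> has_proj_arc R (size gens) n.
Proof.
move=> Hex /and5P [/allP Hin /allP Hun Huq /allP Hd /allP Hc].
rewrite -(size_map decT); apply: arc_crit.
- by move=> t /mapP [c cin ->]; apply/(unimodc_ok (Hin _ cin)); apply: Hun.
- by rewrite map_inj_in_uniq // => c d /Hin ? /Hin ?; apply: decT_inj.
- move=> s t r /mapP [cs csin ->] /mapP [ct ctin ->].
  have [r' hr' <-] := Hsurj r.
  have [hin <-] := tscalec_ok (Hin _ csin) hr'.
  move/(decT_inj hin (Hin _ ctin)) => E.
  move/allP: (Hd _ csin) => /(_ _ ctin) /orP [/eqP -> //|/allP /(_ r')].
  by rewrite mem_codes hr' E eqxx => /(_ isT).
- move=> x y Hinj; have [u [Hu Hx Hy]] := Hex x y Hinj.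
  exists u; split => //.
  have [uc huc Eu] := decT_surj u.
  have Hcnt : (count (fun t => dotc uc t == zc) gens <= n)%N.
    move: huc Hu; rewrite -Eu; clear Eu; case: uc => [[a b] c] /and3P [/= ha hb hc] Hu.
    move: (Hc a); rewrite mem_codes => /(_ ha) /allP /(_ b); rewrite mem_codes => /(_ hb).
    move/allP => /(_ c); rewrite mem_codes => /(_ hc) /orP [|//].
    have hin : inr (a, b, c) by apply/and3P.
    by move/negP; case; exact: (proj2 (unimodc_ok hin) Hu).
  apply: leq_trans Hcnt.
  have -> : count (fun t => dotc uc t == zc) gens = count (fun t => dot u t == 0) (map decT gens).
    rewrite count_map; apply: eq_in_count => c /Hin hc /=.
    have [hd ed] := dotc_ok huc hc; have [hz ez] := br_zc.
    rewrite -Eu -ed -ez; apply/eqP/eqP => [->//|]; exact: dec_inj.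
  rewrite -size_filter; apply: leq_trans (card_size _).
  by apply: subset_leq_card; apply/subsetP => t; rewrite inE mem_filter andbC.
Qed.

End Code.

Definition decF (k : nat) : F4 := ((k %/ 2)%:R, (k %% 2)%:R).

Lemma F2_cases (a : 'F_2) : a = 0%:R \/ a = 1%:R.
Proof. case: a => [[|[|k]] Hk]; [left | right | ]; try by apply/eqP. by []. Qed.

Lemma decF_surj (a : F4) : exists2 k, (k < 4)%N & decF k = a.
Proof.
case: a => a b; case: (F2_cases a) => ->; case: (F2_cases b) => ->.
- by exists 0%N.
- by exists 1%N.
- by exists 2%N.
- by exists 3%N.
Qed.

Lemma F4_all (P : F4 -> Prop) : (forall k, (k < 4)%N -> P (decF k)) -> forall a, P a.
Proof. by move=> H a; have [k hk <-] := decF_surj a; apply: H. Qed.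

Lemma F4_inv (z : F4) : z != 0 -> exists w, w * z = 1.
Proof.
move: z; apply: F4_all; case=> [|[|[|[|k]]]] hk hz.
- have e0 : decF 0 = 0 by apply/eqP.
  by rewrite e0 eqxx in hz.
- by exists (decF 3); apply/eqP.
- by exists (decF 2); apply/eqP.
- by exists (decF 1); apply/eqP.
- by [].
Qed.

Lemma F4_sq_nz (z : F4) : z != 0 -> z ^+ 2 != 0.
Proof.
move: z; apply: F4_all; case=> [|[|[|[|k]]]] hk hz //; try by apply/eqP.
Qed.

Lemma F4_2 (z : F4) : z + z = 0.
Proof. by transitivity ((1 + 1) * z); [ring | rewrite F4_char2 mul0r]. Qed.

Lemma F4_sqrB (A B : F4) : (A - B) ^+ 2 = A ^+ 2 - B ^+ 2.
Proof.
transitivity (A ^+ 2 - B ^+ 2 + ((B ^+ 2 - A * B) + (B ^+ 2 - A * B))); first by ring.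
by rewrite F4_2 addr0.
Qed.

Definition crossF (p q : F4 * F4 * F4) : F4 * F4 * F4 :=
  (p.1.2 * q.2 - p.2 * q.1.2, p.2 * q.1.1 - p.1.1 * q.2, p.1.1 * q.1.2 - p.1.2 * q.1.1).

Lemma dep_F4 (X Y : F4 * F4 * F4) :
  (crossF X Y).1.1 = 0 -> (crossF X Y).1.2 = 0 -> (crossF X Y).2 = 0 ->
  exists al be, [/\ al != 0 \/ be != 0, X.1.1 * al + Y.1.1 * be = 0,
                   X.1.2 * al + Y.1.2 * be = 0 & X.2 * al + Y.2 * be = 0].
Proof.
case: X Y => [[x0 x1] x2] [[y0 y1] y2] /= c0 c1 c2.
have [h0|/eqP h0] := eqVneq x0 0; last first.
  exists y0, (- x0); split; first by right; rewrite oppr_eq0; apply/eqP.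
  - by ring.
  - by transitivity (- (x0 * y1 - x1 * y0)); [ring | rewrite c2 oppr0].
  - by transitivity (x2 * y0 - x0 * y2); [ring | rewrite c1].
have [h1|/eqP h1] := eqVneq x1 0; last first.
  exists y1, (- x1); split; first by right; rewrite oppr_eq0; apply/eqP.
  - by transitivity (x0 * y1 - x1 * y0); [ring | rewrite c2].
  - by ring.
  - by transitivity (- (x1 * y2 - x2 * y1)); [ring | rewrite c0 oppr0].
have [h2|/eqP h2] := eqVneq x2 0; last first.
  exists y2, (- x2); split; first by right; rewrite oppr_eq0; apply/eqP.
  - by transitivity (- (x2 * y0 - x0 * y2)); [ring | rewrite c1 oppr0].
  - by transitivity (x1 * y2 - x2 * y1); [ring | rewrite c0].
  - by ring.
exists 1, 0; split; first by left; apply/eqP.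
- by rewrite h0; ring.
- by rewrite h1; ring.
- by rewrite h2; ring.
Qed.

Section Residue.
Variable R : finNzRingType.
Variables (rho : R -> F4) (theta : R) (sig : F4 -> R).
Hypotheses (rhoD : forall a b, rho (a + b) = rho a + rho b)
  (rhoM : forall a b, rho (a * b) = rho a * rho b)
  (rhoS : forall al, rho (sig al) = al)
  (rhoZ : forall a, rho a = 0 -> a * theta = 0)
  (rhoT0 : forall a, a * theta = 0 -> rho a = 0)
  (rhoU : forall a, rho a != 0 -> exists w, w * a = 1).

Lemma rho0 : rho 0 = 0.
Proof. by apply: (@addrI _ (rho 0)); rewrite -rhoD !addr0. Qed.

Lemma rhoN a : rho (- a) = - rho a.
Proof. by apply: (@addrI _ (rho a)); rewrite -rhoD !subrr rho0. Qed.

Lemma rhoB a b : rho (a - b) = rho a - rho b.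
Proof. by rewrite rhoD rhoN. Qed.

Definition rhoT (x : 'rV[R]_3) : F4 * F4 * F4 := (rho (x 0 i0), rho (x 0 i1), rho (x 0 i2)).

Lemma lincomb2_entry (x y : 'rV[R]_3) a b j : lincomb2 x y (a, b) 0 j = x 0 j * a + y 0 j * b.
Proof. by rewrite /lincomb2 !mxE. Qed.

Lemma cross_nz (x y : 'rV[R]_3) : injective (lincomb2 x y) ->
  [\/ (crossF (rhoT x) (rhoT y)).1.1 != 0, (crossF (rhoT x) (rhoT y)).1.2 != 0 |
      (crossF (rhoT x) (rhoT y)).2 != 0].
Proof.
move=> Hinj.
case: (eqVneq (crossF (rhoT x) (rhoT y)).1.1 0) => [c0|]; last by constructor 1.
case: (eqVneq (crossF (rhoT x) (rhoT y)).1.2 0) => [c1|]; last by constructor 2.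
case: (eqVneq (crossF (rhoT x) (rhoT y)).2 0) => [c2|]; last by constructor 3.
exfalso.
have [al [be [Hnz e0 e1 e2]]] := dep_F4 c0 c1 c2.
have key : forall j, rho (x 0 j) * al + rho (y 0 j) * be = 0 ->
    x 0 j * (sig al * theta) + y 0 j * (sig be * theta) = 0.
  move=> j hj; rewrite !mulrA -mulrDl; apply: rhoZ.
  by rewrite rhoD !rhoM !rhoS.
have E : lincomb2 x y (sig al * theta, sig be * theta) = lincomb2 x y (0, 0).
  apply: rowP3; rewrite !lincomb2_entry !mulr0 addr0; apply: key => //.
case: (Hinj _ _ E) => /rhoT0 ha /rhoT0 hb.
by move: ha hb Hnz; rewrite !rhoS => -> ->; rewrite eqxx; case.
Qed.

Definition crossR (p q : R * R * R) : R * R * R :=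
  (p.1.2 * q.2 - p.2 * q.1.2, p.2 * q.1.1 - p.1.1 * q.2, p.1.1 * q.1.2 - p.1.2 * q.1.1).
Definition rowT (x : 'rV[R]_3) : R * R * R := (x 0 i0, x 0 i1, x 0 i2).

Lemma exist_comm
  (Hid : forall p q : R * R * R, dot (crossR p q) p = 0 /\ dot (crossR p q) q = 0)
  (x y : 'rV[R]_3) : injective (lincomb2 x y) ->
  exists u, [/\ unimodR u, dotr u x = 0 & dotr u y = 0].
Proof.
move=> Hinj; have Hc := cross_nz Hinj.
exists (crossR (rowT x) (rowT y)); split.
- case: Hc => H.
  + have [w Hw] : exists w, w * (crossR (rowT x) (rowT y)).1.1 = 1 by apply: rhoU; rewrite /= rhoB !rhoM.
    by exists w; left.
  + have [w Hw] : exists w, w * (crossR (rowT x) (rowT y)).1.2 = 1 by apply: rhoU; rewrite /= rhoB !rhoM.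
    by exists w; right; left.
  + have [w Hw] : exists w, w * (crossR (rowT x) (rowT y)).2 = 1 by apply: rhoU; rewrite /= rhoB !rhoM.
    by exists w; right; right.
- exact: (Hid (rowT x) (rowT y)).1.
- exact: (Hid (rowT x) (rowT y)).2.
Qed.

End Residue.

Lemma T4_add1 (P Q : T4) : (P + Q).1 = P.1 + Q.1. Proof. by []. Qed.
Lemma T4_add2 (P Q : T4) : (P + Q).2 = P.2 + Q.2. Proof. by []. Qed.
Lemma T4_mul1 (P Q : T4) : (P * Q).1 = P.1 * Q.1. Proof. by []. Qed.
Lemma T4_mul2 (P Q : T4) : (P * Q).2 = P.1 * Q.2 + P.2 * Q.1 ^+ 2. Proof. by []. Qed.
Lemma T4_eq0 (P : T4) : P.1 = 0 -> P.2 = 0 -> P = 0.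
Proof. by case: P => a b /= -> ->. Qed.

Lemma cramer (p q : F4 * F4 * F4) (s t : F4) :
  [\/ (crossF p q).1.1 != 0, (crossF p q).1.2 != 0 | (crossF p q).2 != 0] ->
  exists d : F4 * F4 * F4, d.1.1 * p.1.1 + d.1.2 * p.1.2 + d.2 * p.2 = s /\
                           d.1.1 * q.1.1 + d.1.2 * q.1.2 + d.2 * q.2 = t.
Proof.
case: p q => [[p0 p1] p2] [[q0 q1] q2] /=.
case=> /F4_inv [iw Hw].
- exists (0, iw * (s * q2 - t * p2), iw * (t * p1 - s * q1)) => /=; split.
  + by transitivity (s * (iw * (p1 * q2 - p2 * q1))); [ring | rewrite Hw mulr1].
  + by transitivity (t * (iw * (p1 * q2 - p2 * q1))); [ring | rewrite Hw mulr1].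
- exists (iw * (t * p2 - s * q2), 0, iw * (s * q0 - t * p0)) => /=; split.
  + by transitivity (s * (iw * (p2 * q0 - p0 * q2))); [ring | rewrite Hw mulr1].
  + by transitivity (t * (iw * (p2 * q0 - p0 * q2))); [ring | rewrite Hw mulr1].
- exists (iw * (s * q1 - t * p1), iw * (t * p0 - s * q0), 0) => /=; split.
  + by transitivity (s * (iw * (p0 * q1 - p1 * q0))); [ring | rewrite Hw mulr1].
  + by transitivity (t * (iw * (p0 * q1 - p1 * q0))); [ring | rewrite Hw mulr1].
Qed.

Lemma T4_eq (P Q : T4) : P.1 = Q.1 -> P.2 = Q.2 -> P = Q.
Proof. by case: P Q => a b [c d] /= -> ->. Qed.

Definition rhoT4 (a : T4) : F4 := a.1.
Definition thT4 : T4 := (0, 1).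
Definition sigT4 (al : F4) : T4 := (al, 0).

Lemma rhoT4D a b : rhoT4 (a + b) = rhoT4 a + rhoT4 b. Proof. by []. Qed.
Lemma rhoT4M a b : rhoT4 (a * b) = rhoT4 a * rhoT4 b. Proof. by []. Qed.
Lemma rhoT4S al : rhoT4 (sigT4 al) = al. Proof. by []. Qed.
Lemma rhoT4Z a : rhoT4 a = 0 -> a * thT4 = 0.
Proof.
rewrite /rhoT4 => H; apply: T4_eq0; rewrite ?T4_mul1 ?T4_mul2 H /=; ring.
Qed.
Lemma rhoT4T0 a : a * thT4 = 0 -> rhoT4 a = 0.
Proof.
move=> H; have := f_equal snd H; rewrite T4_mul2 /= /rhoT4.
have -> : a.1 * 1 + a.2 * 0 ^+ 2 = a.1 by ring.
by [].
Qed.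
Lemma rhoT4U a : rhoT4 a != 0 -> exists w, w * a = 1.
Proof.
rewrite /rhoT4 => /F4_inv [iv Hiv].
exists (iv, - (iv * a.2 * iv ^+ 2)); apply: T4_eq; rewrite ?T4_mul1 ?T4_mul2 /=.
  by rewrite Hiv.
transitivity (iv * a.2 - iv * a.2 * (iv * a.1) ^+ 2); first by ring.
by rewrite Hiv expr1n mulr1 subrr.
Qed.

Lemma exist_T4 (x y : 'rV[T4]_3) : injective (lincomb2 x y) ->
  exists u, [/\ unimodR u, dotr u x = 0 & dotr u y = 0].
Proof.
move=> Hinj.
have Hc := cross_nz rhoT4D rhoT4M rhoT4S rhoT4Z rhoT4T0 Hinj.
set c := crossF _ _ in Hc.
set a0 := (x 0 i0).1; set a1 := (x 0 i1).1; set a2 := (x 0 i2).1.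
set b0 := (x 0 i0).2; set b1 := (x 0 i1).2; set b2 := (x 0 i2).2.
set e0 := (y 0 i0).1; set e1 := (y 0 i1).1; set e2 := (y 0 i2).1.
set f0 := (y 0 i0).2; set f1 := (y 0 i1).2; set f2 := (y 0 i2).2.
have Hpq : [\/ (crossF (a0 ^+ 2, a1 ^+ 2, a2 ^+ 2) (e0 ^+ 2, e1 ^+ 2, e2 ^+ 2)).1.1 != 0,
    (crossF (a0 ^+ 2, a1 ^+ 2, a2 ^+ 2) (e0 ^+ 2, e1 ^+ 2, e2 ^+ 2)).1.2 != 0 |
    (crossF (a0 ^+ 2, a1 ^+ 2, a2 ^+ 2) (e0 ^+ 2, e1 ^+ 2, e2 ^+ 2)).2 != 0].
  rewrite /= -!exprMn -!F4_sqrB.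
  by case: Hc => H; [constructor 1 | constructor 2 | constructor 3]; apply: F4_sq_nz.
have [d [hd1 hd2]] := cramer (- (c.1.1 * b0 + c.1.2 * b1 + c.2 * b2))
                            (- (c.1.1 * f0 + c.1.2 * f1 + c.2 * f2)) Hpq.
move: hd1 hd2; rewrite /= => hd1 hd2.
exists ((c.1.1, d.1.1), (c.1.2, d.1.2), (c.2, d.2)); split.
- case: Hc => H; [ have [w Hw] := @rhoT4U (c.1.1, d.1.1) H
                 | have [w Hw] := @rhoT4U (c.1.2, d.1.2) H
                 | have [w Hw] := @rhoT4U (c.2, d.2) H ]; exists w; rewrite /= Hw; auto.
- rewrite /dotr; apply: T4_eq0.
  + rewrite !T4_add1 !T4_mul1 /= -/a0 -/a1 -/a2 /c /=; ring.
  + rewrite !T4_add2 !T4_mul2 /= -/a0 -/a1 -/a2 -/b0 -/b1 -/b2.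
    transitivity ((c.1.1 * b0 + c.1.2 * b1 + c.2 * b2) +
       (d.1.1 * a0 ^+ 2 + d.1.2 * a1 ^+ 2 + d.2 * a2 ^+ 2)); first by rewrite /c /=; ring.
    by rewrite hd1 subrr.
- rewrite /dotr; apply: T4_eq0.
  + rewrite !T4_add1 !T4_mul1 /= -/e0 -/e1 -/e2 /c /=; ring.
  + rewrite !T4_add2 !T4_mul2 /= -/e0 -/e1 -/e2 -/f0 -/f1 -/f2.
    transitivity ((c.1.1 * f0 + c.1.2 * f1 + c.2 * f2) +
       (d.1.1 * e0 ^+ 2 + d.1.2 * e1 ^+ 2 + d.2 * e2 ^+ 2)); first by rewrite /c /=; ring.
    by rewrite hd2 subrr.
Qed.

Definition addTS4 : seq (seq nat) := [:: [:: 0; 1; 2; 3; 4; 5; 6; 7; 8; 9; 10; 11; 12; 13; 14; 15]; [:: 1; 0; 3; 2; 5; 4; 7; 6; 9; 8; 11; 10; 13; 12; 15; 14]; [:: 2; 3; 0; 1; 6; 7; 4; 5; 10; 11; 8; 9; 14; 15; 12; 13]; [:: 3; 2; 1; 0; 7; 6; 5; 4; 11; 10; 9; 8; 15; 14; 13; 12]; [:: 4; 5; 6; 7; 0; 1; 2; 3; 12; 13; 14; 15; 8; 9; 10; 11]; [:: 5; 4; 7; 6; 1; 0; 3; 2; 13; 12; 15; 14; 9; 8; 11; 10]; [:: 6; 7; 4; 5; 2; 3; 0; 1; 14; 15; 12; 13; 10; 11; 8; 9]; [:: 7; 6; 5; 4; 3; 2; 1; 0; 15; 14; 13; 12; 11;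 10; 9; 8]; [:: 8; 9; 10; 11; 12; 13; 14; 15; 0; 1; 2; 3; 4; 5; 6; 7]; [:: 9; 8; 11; 10; 13; 12; 15; 14; 1; 0; 3; 2; 5; 4; 7; 6]; [:: 10; 11; 8; 9; 14; 15; 12; 13; 2; 3; 0; 1; 6; 7; 4; 5]; [:: 11; 10; 9; 8; 15; 14; 13; 12; 3; 2; 1; 0; 7; 6; 5; 4]; [:: 12; 13; 14; 15; 8; 9; 10; 11; 4; 5; 6; 7; 0; 1; 2; 3]; [:: 13; 12; 15; 14; 9; 8; 11; 10; 5; 4; 7; 6; 1; 0; 3; 2]; [:: 14; 15; 12; 13; 10; 11; 8; 9; 6; 7; 4; 5; 2; 3; 0; 1]; [:: 15; 14; 13; 12; 11; 10; 9; 8; 7; 6; 5; 4; 3; 2; 1; 0]].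
Definition mulTS4 : seq (seq nat) := [:: [:: 0; 0; 0; 0; 0; 0; 0; 0; 0; 0; 0; 0; 0; 0; 0; 0]; [:: 0; 0; 0; 0; 3; 3; 3; 3; 1; 1; 1; 1; 2; 2; 2; 2]; [:: 0; 0; 0; 0; 1; 1; 1; 1; 2; 2; 2; 2; 3; 3; 3; 3]; [:: 0; 0; 0; 0; 2; 2; 2; 2; 3; 3; 3; 3; 1; 1; 1; 1]; [:: 0; 3; 1; 2; 12; 15; 13; 14; 4; 7; 5; 6; 8; 11; 9; 10]; [:: 0; 3; 1; 2; 15; 12; 14; 13; 5; 6; 4; 7; 10; 9; 11; 8]; [:: 0; 3; 1; 2; 13; 14; 12; 15; 6; 5; 7; 4; 11; 8; 10; 9]; [:: 0; 3; 1; 2; 14; 13; 15; 12; 7; 4; 6; 5; 9; 10; 8; 11]; [:: 0; 1; 2; 3; 4; 5; 6; 7; 8; 9; 10; 11; 12; 13; 14; 15]; [:: 0; 1; 2; 3; 7; 6; 5; 4; 9; 8; 11; 10; 14; 15; 12; 13]; [:: 0; 1; 2; 3; 5; 4; 7; 6; 10; 11; 8; 9; 15; 14; 13; 12]; [:: 0; 1; 2; 3; 6; 7; 4; 5; 11; 10; 9; 8; 13; 12; 15; 14]; [:: 0; 2; 3; 1; 8; 10; 11; 9; 12; 14; 15; 13; 4; 6; 7; 5]; [:: 0; 2; 3; 1; 11; 9; 8; 10; 13; 15; 14; 12; 6; 4; 5; 7]; [:: 0; 2; 3; 1; 9; 11; 10; 8; 14; 12; 13; 15; 7; 5; 4; 6];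 [:: 0; 2; 3; 1; 10; 8; 9; 11; 15; 13; 12; 14; 5; 7; 6; 4]].
Definition addcS4 (i j : nat) : nat := nth 0%N (nth [::] addTS4 i) j.
Definition mulcS4 (i j : nat) : nat := nth 0%N (nth [::] mulTS4 i) j.
Definition gensS4_120 : seq (nat * nat * nat) := [:: (0, 4, 1); (0, 4, 2); (0, 4, 8); (0, 4, 10); (0, 4, 13); (0, 4, 14); (1, 0, 4); (1, 0, 12); (1, 2, 4); (1, 2, 8); (1, 3, 8); (1, 3, 12); (1, 8, 0); (1, 8, 3); (1, 8, 5); (1, 8, 6); (1, 8, 13); (1, 8, 15); (1, 12, 0); (1, 12, 3); (1, 12, 4); (1, 12, 6); (1, 12, 9); (1, 12, 10); (4, 0, 1); (4, 0, 3); (4, 0, 4); (4, 0, 7); (4, 0, 12); (4, 0, 13); (4, 1, 4); (4, 1, 6); (4, 1, 9); (4, 1, 11); (4, 1, 13); (4, 1, 15); (4, 2, 1); (4, 2, 2); (4, 2, 8); (4, 2, 9); (4, 2, 12); (4, 2, 15); (4, 3, 2); (4, 3, 3); (4, 3, 6); (4, 3, 7); (4, 3, 8); (4, 3, 11); (4, 4, 0); (4, 4, 2); (4, 4, 6); (4, 4, 7); (4, 4, 8); (4, 4, 11); (4, 4, 12); (4, 4, 15); (4, 5, 1); (4, 5, 2); (4, 5, 4); (4, 5, 6); (4, 5, 8); (4, 5, 9); (4, 5, 14); (4, 5, 15); (4, 6, 0); (4, 6, 1); (4, 6, 4); (4, 6, 7); (4, 6, 9); (4, 6, 11); (4, 6,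 12); (4, 6, 14); (4, 8, 0); (4, 8, 2); (4, 8, 4); (4, 8, 7); (4, 8, 12); (4, 8, 13); (4, 9, 2); (4, 9, 3); (4, 9, 6); (4, 9, 7); (4, 9, 9); (4, 9, 11); (4, 10, 4); (4, 10, 6); (4, 10, 8); (4, 10, 9); (4, 10, 12); (4, 10, 14); (4, 11, 0); (4, 11, 3); (4, 11, 8); (4, 11, 11); (4, 11, 13); (4, 11, 14); (4, 12, 4); (4, 12, 6); (4, 12, 9); (4, 12, 11); (4, 12, 13); (4, 12, 14); (4, 13, 0); (4, 13, 3); (4, 13, 6); (4, 13, 7); (4, 13, 8); (4, 13, 11); (4, 14, 1); (4, 14, 3); (4, 14, 8); (4, 14, 9); (4, 14, 14); (4, 14, 15); (4, 15, 0); (4, 15, 1); (4, 15, 4); (4, 15, 7); (4, 15, 13); (4, 15, 15)].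
Definition gensS4_140 : seq (nat * nat * nat) := [:: (0, 1, 4); (4, 11, 9); (4, 4, 0); (1, 8, 14); (4, 14, 9); (1, 2, 8); (4, 10, 8); (4, 7, 0); (0, 4, 9); (4, 13, 11); (0, 1, 8); (4, 10, 9); (4, 4, 2); (1, 4, 11); (4, 15, 8); (1, 1, 8); (4, 11, 8); (4, 7, 2); (1, 12, 6); (4, 12, 10); (0, 4, 0); (4, 7, 8); (4, 7, 15); (4, 0, 7); (1, 12, 12); (1, 12, 0); (4, 5, 11); (4, 6, 12); (4, 0, 5); (1, 8, 8); (0, 4, 3); (4, 5, 8); (4, 7, 14); (4, 3, 6); (1, 8, 10); (1, 12, 2); (4, 7, 11); (4, 6, 13); (4, 3, 4); (1, 12, 15); (0, 4, 4); (1, 4, 0); (4, 6, 10); (4, 4, 13); (4, 0, 6); (1, 4, 4); (1, 8, 0); (4, 4, 9); (4, 5, 14); (4, 0, 4); (0, 4, 5); (1, 8, 1); (4, 6, 9); (4, 5, 15); (4, 3, 5); (1, 4, 5); (1, 4, 3); (4, 4, 10); (4, 4, 12); (4, 3, 7); (0, 4, 11); (4, 14, 11); (1, 2, 12); (4, 9, 10); (4, 6, 2); (1, 8, 13); (4, 13, 9); (1, 3, 4); (4, 8, 11); (4, 5, 2); (0, 4, 13); (4, 1, 10); (4, 5, 5); (4, 15, 3); (4, 10, 15); (1, 1, 4); (4, 9, 11); (4, 5, 0); (1, 12, 7); (4, 15, 10); (1, 3, 12); (4, 8, 10); (4, 6, 0); (1, 4, 9); (4, 12, 8); (1, 4, 15);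 (4, 3, 11); (4, 4, 6); (4, 14, 0); (4, 8, 14); (1, 8, 4); (4, 0, 9); (4, 6, 7); (4, 12, 1); (4, 11, 12); (1, 12, 9); (4, 2, 8); (4, 7, 4); (4, 13, 2); (4, 9, 13); (4, 0, 12); (4, 13, 12); (4, 10, 1); (4, 13, 7); (4, 11, 7); (4, 0, 14); (4, 12, 13); (4, 9, 1); (4, 15, 4); (4, 9, 6); (4, 0, 13); (4, 14, 15); (4, 8, 1); (4, 12, 5); (4, 10, 4); (4, 0, 15); (4, 15, 14); (4, 11, 1); (4, 14, 6); (4, 8, 5); (4, 3, 12); (4, 14, 14); (4, 8, 3); (4, 15, 7); (4, 9, 5); (4, 3, 14); (4, 15, 15); (4, 11, 3); (4, 13, 4); (4, 11, 4); (4, 3, 13); (4, 13, 13); (4, 10, 3); (4, 14, 5); (4, 8, 6); (4, 3, 15); (4, 12, 12); (4, 9, 3); (4, 12, 6); (4, 10, 7)].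
Definition gensS4_152 : seq (nat * nat * nat) := [:: (0, 1, 4); (0, 1, 8); (0, 4, 4); (0, 4, 5); (0, 4, 7); (0, 4, 9); (0, 4, 11); (0, 4, 13); (0, 4, 14); (0, 4, 15); (1, 0, 4); (1, 0, 12); (1, 2, 4); (1, 3, 4); (1, 3, 8); (1, 3, 12); (1, 4, 2); (1, 4, 3); (1, 4, 4); (1, 4, 6); (1, 4, 12); (1, 4, 14); (1, 8, 0); (1, 8, 3); (1, 8, 4); (1, 8, 6); (1, 8, 7); (1, 8, 11); (1, 8, 12); (1, 8, 14); (1, 12, 0); (1, 12, 2); (1, 12, 4); (1, 12, 6); (1, 12, 13); (1, 12, 15); (4, 0, 1); (4, 0, 3); (4, 0, 4); (4, 0, 5); (4, 0, 8); (4, 0, 11); (4, 0, 12); (4, 0, 15); (4, 1, 0); (4, 1, 3); (4, 1, 4); (4, 1, 7); (4, 1, 9); (4, 1, 10); (4, 1, 13); (4, 1, 15); (4, 2, 0); (4, 2, 1); (4, 2, 4); (4, 2, 6); (4, 2, 8); (4, 2, 11); (4, 2, 13); (4, 2, 15); (4, 3, 0); (4, 3, 1); (4, 3, 5); (4, 3, 6); (4, 3, 9); (4, 3, 10); (4, 3, 12); (4, 3, 13); (4, 4, 0); (4, 4, 2); (4, 4, 4); (4, 4, 5); (4, 4, 6); (4, 4, 8); (4, 4, 9); (4, 4, 12); (4, 4, 14); (4, 4, 15); (4, 6, 1); (4, 6, 2); (4, 6, 4); (4, 6, 6); (4, 6, 8); (4, 6, 10); (4, 6, 14); (4, 6, 15);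 (4, 7, 0); (4, 7, 1); (4, 7, 4); (4, 7, 5); (4, 7, 6); (4, 7, 9); (4, 7, 10); (4, 7, 12); (4, 7, 13); (4, 7, 14); (4, 8, 0); (4, 8, 1); (4, 8, 3); (4, 8, 4); (4, 8, 5); (4, 8, 8); (4, 8, 11); (4, 8, 13); (4, 8, 14); (4, 9, 2); (4, 9, 3); (4, 9, 5); (4, 9, 6); (4, 9, 9); (4, 9, 11); (4, 9, 12); (4, 9, 14); (4, 9, 15); (4, 10, 2); (4, 11, 1); (4, 11, 2); (4, 11, 4); (4, 11, 6); (4, 11, 8); (4, 11, 9); (4, 11, 12); (4, 11, 13); (4, 11, 14); (4, 12, 4); (4, 12, 6); (4, 12, 7); (4, 12, 9); (4, 12, 11); (4, 12, 13); (4, 12, 15); (4, 13, 2); (4, 13, 3); (4, 13, 4); (4, 13, 5); (4, 13, 6); (4, 13, 9); (4, 13, 10); (4, 14, 0); (4, 14, 2); (4, 14, 3); (4, 14, 10); (4, 14, 11); (4, 14, 13); (4, 14, 14); (4, 15, 0); (4, 15, 1); (4, 15, 2); (4, 15, 5); (4, 15, 6); (4, 15, 14); (4, 15, 15)].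

Definition decS (k : nat) : S4 := (decF (k %/ 4), decF (k %% 4)).

Lemma decS_surj (x : S4) : exists2 i, (i < 16)%N & decS i = x.
Proof.
case: x => a b; have [i hi <-] := decF_surj a; have [j hj <-] := decF_surj b.
exists (4 * i + j)%N.
  by rewrite -addnS (leq_trans (leq_add (leqnn _) hj)) // -[16%N]/(4 * 3 + 4)%N leq_add2r leq_mul2l /= -ltnS.
by rewrite /decS (mulnC 4) divnMDl // divn_small // addn0 modnMDl modn_small.
Qed.

Lemma bridgeS : bridge decS addcS4 mulcS4 0 8.
Proof. by vm_compute. Qed.

Lemma S4_add1 (P Q : S4) : (P + Q).1 = P.1 + Q.1. Proof. by []. Qed.
Lemma S4_mul1 (P Q : S4) : (P * Q).1 = P.1 * Q.1. Proof. by []. Qed.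
Lemma S4_mul2 (P Q : S4) : (P * Q).2 = P.1 * Q.2 + P.2 * Q.1. Proof. by []. Qed.
Lemma S4_eq (P Q : S4) : P.1 = Q.1 -> P.2 = Q.2 -> P = Q.
Proof. by case: P Q => a b [c d] /= -> ->. Qed.

Definition rhoS4 (a : S4) : F4 := a.1.
Definition thS4 : S4 := (0, 1).
Definition sigS4 (al : F4) : S4 := (al, 0).

Lemma rhoS4D a b : rhoS4 (a + b) = rhoS4 a + rhoS4 b. Proof. by []. Qed.
Lemma rhoS4M a b : rhoS4 (a * b) = rhoS4 a * rhoS4 b. Proof. by []. Qed.
Lemma rhoS4S al : rhoS4 (sigS4 al) = al. Proof. by []. Qed.
Lemma rhoS4Z a : rhoS4 a = 0 -> a * thS4 = 0.
Proof.
rewrite /rhoS4 => H; apply: S4_eq; rewrite ?S4_mul1 ?S4_mul2 H /=; ring.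
Qed.
Lemma rhoS4T0 a : a * thS4 = 0 -> rhoS4 a = 0.
Proof.
move=> H; have := f_equal snd H; rewrite S4_mul2 /= /rhoS4.
have -> : a.1 * 1 + a.2 * 0 = a.1 by ring.
by [].
Qed.
Lemma rhoS4U a : rhoS4 a != 0 -> exists w, w * a = 1.
Proof.
rewrite /rhoS4 => /F4_inv [iv Hiv].
exists (iv, - (iv * a.2 * iv)); apply: S4_eq; rewrite ?S4_mul1 ?S4_mul2 /=.
  by rewrite Hiv.
transitivity (iv * a.2 - iv * a.2 * (iv * a.1)); first by ring.
by rewrite Hiv mulr1 subrr.
Qed.

Lemma HidS (p q : S4 * S4 * S4) : dot (crossR p q) p = 0 /\ dot (crossR p q) q = 0.
Proof. by case: p q => [[a b] c] [[d e] f]; rewrite /dot /crossR /=; split; ring. Qed.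

Lemma exist_S4 (x y : 'rV[S4]_3) : injective (lincomb2 x y) ->
  exists u, [/\ unimodR u, dotr u x = 0 & dotr u y = 0].
Proof. exact: (exist_comm rhoS4D rhoS4M rhoS4S rhoS4Z rhoS4T0 rhoS4U HidS). Qed.

Lemma chkS4_120 : arc_checks addcS4 mulcS4 0 8 gensS4_120 8. Proof. by vm_compute. Qed.
Lemma chkS4_140 : arc_checks addcS4 mulcS4 0 8 gensS4_140 9. Proof. by vm_compute. Qed.
Lemma chkS4_152 : arc_checks addcS4 mulcS4 0 8 gensS4_152 10. Proof. by vm_compute. Qed.

Lemma arcS4_120 : has_proj_arc S4 120 8.
Proof. exact: (arc_code bridgeS decS_surj exist_S4 chkS4_120). Qed.
Lemma arcS4_140 : has_proj_arc S4 140 9.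
Proof. exact: (arc_code bridgeS decS_surj exist_S4 chkS4_140). Qed.
Lemma arcS4_152 : has_proj_arc S4 152 10.
Proof. exact: (arc_code bridgeS decS_surj exist_S4 chkS4_152). Qed.

Definition addTT4 : seq (seq nat) := [:: [:: 0; 1; 2; 3; 4; 5; 6; 7; 8; 9; 10; 11; 12; 13; 14; 15]; [:: 1; 0; 3; 2; 5; 4; 7; 6; 9; 8; 11; 10; 13; 12; 15; 14]; [:: 2; 3; 0; 1; 6; 7; 4; 5; 10; 11; 8; 9; 14; 15; 12; 13]; [:: 3; 2; 1; 0; 7; 6; 5; 4; 11; 10; 9; 8; 15; 14; 13; 12]; [:: 4; 5; 6; 7; 0; 1; 2; 3; 12; 13; 14; 15; 8; 9; 10; 11]; [:: 5; 4; 7; 6; 1; 0; 3; 2; 13; 12; 15; 14; 9; 8; 11; 10]; [:: 6; 7; 4; 5; 2; 3; 0; 1; 14; 15; 12; 13; 10; 11; 8; 9]; [:: 7; 6; 5; 4; 3; 2; 1; 0; 15; 14; 13; 12; 11; 10; 9; 8]; [:: 8; 9; 10; 11; 12; 13; 14; 15; 0; 1; 2; 3; 4; 5; 6; 7]; [:: 9; 8; 11; 10; 13; 12; 15; 14; 1; 0; 3; 2; 5; 4; 7; 6]; [:: 10; 11; 8; 9; 14; 15; 12; 13; 2; 3; 0; 1; 6; 7; 4; 5]; [:: 11; 10; 9; 8; 15; 14; 13; 12; 3; 2; 1; 0; 7; 6; 5; 4]; [:: 12; 13; 14; 15; 8; 9; 10; 11; 4; 5; 6; 7; 0; 1; 2;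 3]; [:: 13; 12; 15; 14; 9; 8; 11; 10; 5; 4; 7; 6; 1; 0; 3; 2]; [:: 14; 15; 12; 13; 10; 11; 8; 9; 6; 7; 4; 5; 2; 3; 0; 1]; [:: 15; 14; 13; 12; 11; 10; 9; 8; 7; 6; 5; 4; 3; 2; 1; 0]].
Definition mulTT4 : seq (seq nat) := [:: [:: 0; 0; 0; 0; 0; 0; 0; 0; 0; 0; 0; 0; 0; 0; 0; 0]; [:: 0; 0; 0; 0; 2; 2; 2; 2; 1; 1; 1; 1; 3; 3; 3; 3]; [:: 0; 0; 0; 0; 3; 3; 3; 3; 2; 2; 2; 2; 1; 1; 1; 1]; [:: 0; 0; 0; 0; 1; 1; 1; 1; 3; 3; 3; 3; 2; 2; 2; 2]; [:: 0; 3; 1; 2; 12; 15; 13; 14; 4; 7; 5; 6; 8; 11; 9; 10]; [:: 0; 3; 1; 2; 14; 13; 15; 12; 5; 6; 4; 7; 11; 8; 10; 9]; [:: 0; 3; 1; 2; 15; 12; 14; 13; 6; 5; 7; 4; 9; 10; 8; 11]; [:: 0; 3; 1; 2; 13; 14; 12; 15; 7; 4; 6; 5; 10; 9; 11; 8]; [:: 0; 1; 2; 3; 4; 5; 6; 7; 8; 9; 10; 11; 12; 13; 14; 15]; [:: 0; 1; 2; 3; 6; 7; 4; 5; 9; 8; 11; 10; 15; 14; 13; 12]; [:: 0; 1; 2; 3; 7; 6; 5; 4; 10; 11; 8; 9; 13; 12; 15; 14]; [:: 0; 1; 2; 3; 5; 4; 7; 6; 11; 10; 9; 8; 14; 15;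 12; 13]; [:: 0; 2; 3; 1; 8; 10; 11; 9; 12; 14; 15; 13; 4; 6; 7; 5]; [:: 0; 2; 3; 1; 10; 8; 9; 11; 13; 15; 14; 12; 7; 5; 4; 6]; [:: 0; 2; 3; 1; 11; 9; 8; 10; 14; 12; 13; 15; 5; 7; 6; 4]; [:: 0; 2; 3; 1; 9; 11; 10; 8; 15; 13; 12; 14; 6; 4; 5; 7]].
Definition addcT4 (i j : nat) : nat := nth 0%N (nth [::] addTT4 i) j.
Definition mulcT4 (i j : nat) : nat := nth 0%N (nth [::] mulTT4 i) j.
Definition gensT4_120 : seq (nat * nat * nat) := [:: (0, 0, 4); (0, 1, 12); (0, 4, 1); (0, 4, 3); (0, 4, 4); (0, 4, 6); (0, 4, 13); (0, 4, 15); (1, 0, 4); (1, 1, 4); (1, 2, 8); (1, 3, 8); (1, 4, 0); (1, 4, 1); (1, 8, 5); (1, 8, 7); (1, 8, 9); (1, 8, 11); (1, 12, 0); (1, 12, 1); (1, 12, 9); (1, 12, 11); (1, 12, 12); (1, 12, 14); (4, 0, 0); (4, 0, 2); (4, 0, 8); (4, 0, 10); (4, 0, 13); (4, 0, 14); (4, 1, 2); (4, 1, 3); (4, 1, 5); (4, 1, 7); (4, 1, 9); (4, 1, 10); (4, 2, 6); (4, 2, 7); (4, 2, 8); (4, 2, 9); (4, 2, 14); (4, 2, 15); (4, 3, 0); (4, 3, 3); (4, 3, 5); (4, 3, 6); (4, 3, 13); (4, 3, 15); (4, 4, 0); (4, 4, 1); (4, 4, 4); (4, 4, 5); (4, 4,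 8); (4, 4, 9); (4, 5, 0); (4, 5, 2); (4, 5, 9); (4, 5, 10); (4, 5, 13); (4, 5, 14); (4, 6, 1); (4, 6, 2); (4, 6, 5); (4, 6, 7); (4, 6, 13); (4, 6, 15); (4, 7, 4); (4, 7, 7); (4, 7, 8); (4, 7, 10); (4, 7, 14); (4, 7, 15); (4, 8, 1); (4, 8, 2); (4, 8, 8); (4, 8, 10); (4, 8, 13); (4, 8, 14); (4, 9, 6); (4, 9, 7); (4, 9, 8); (4, 9, 9); (4, 9, 14); (4, 9, 15); (4, 10, 2); (4, 10, 3); (4, 10, 4); (4, 10, 7); (4, 10, 13); (4, 10, 15); (4, 11, 1); (4, 11, 3); (4, 11, 4); (4, 11, 6); (4, 11, 9); (4, 11, 10); (4, 12, 5); (4, 12, 6); (4, 12, 8); (4, 12, 10); (4, 12, 13); (4, 12, 15); (4, 13, 1); (4, 13, 3); (4, 13, 9); (4, 13, 10); (4, 13, 14); (4, 13, 15); (4, 14, 0); (4, 14, 1); (4, 14, 4); (4, 14, 5); (4, 14, 8); (4, 14, 9); (4, 15, 0); (4, 15, 3); (4, 15, 4); (4, 15, 6); (4, 15, 13); (4, 15, 14)].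
Definition gensT4_140 : seq (nat * nat * nat) := [:: (0, 4, 14); (4, 5, 13); (4, 15, 11); (4, 3, 3); (4, 10, 7); (1, 4, 0); (4, 5, 1); (4, 12, 15); (4, 3, 7); (4, 11, 10); (1, 4, 1); (4, 5, 0); (4, 12, 12); (4, 3, 4); (4, 11, 11); (1, 4, 2); (4, 5, 3); (4, 12, 14); (4, 3, 6); (4, 11, 8); (1, 4, 3); (4, 5, 2); (4, 12, 13); (4, 3, 5); (4, 11, 9); (1, 4, 4); (4, 6, 5); (4, 13, 4); (4, 0, 14); (4, 11, 15); (1, 4, 6); (4, 6, 7); (4, 13, 5); (4, 0, 15); (4, 11, 13); (1, 4, 5); (4, 6, 4); (4, 13, 7); (4, 0, 13); (4, 11, 14); (1, 4, 7); (4, 6, 6); (4, 13, 6); (4, 0, 12); (4, 11, 12); (1, 4, 14); (4, 4, 14); (4, 14, 8); (4, 2, 0); (4, 11, 4); (1, 8, 0); (4, 6, 0); (4, 15, 13); (4, 0, 6); (4, 8, 10); (1, 8, 3); (4, 6, 1); (4, 15, 14); (4, 0, 5); (4, 8, 11); (1, 8, 1); (4, 6, 2); (4, 15, 12); (4, 0, 7); (4, 8, 8); (1, 8, 2); (4, 6, 3); (4, 15, 15); (4, 0, 4); (4, 8, 9); (1, 8, 5); (4, 7, 12); (4, 13, 10); (4, 1, 2); (4, 8, 6); (1, 8, 12); (4, 4, 11); (4, 12, 3); (4, 2, 10); (4, 8, 1); (1, 8, 14); (4, 4, 8); (4, 12, 1); (4, 2, 8); (4, 8, 2); (1, 8, 13);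 (4, 4, 9); (4, 12, 2); (4, 2, 11); (4, 8, 3); (1, 8, 15); (4, 4, 10); (4, 12, 0); (4, 2, 9); (4, 8, 0); (1, 12, 4); (4, 5, 10); (4, 13, 0); (4, 3, 11); (4, 9, 3); (1, 12, 5); (4, 5, 9); (4, 13, 2); (4, 3, 9); (4, 9, 0); (1, 12, 6); (4, 5, 11); (4, 13, 3); (4, 3, 8); (4, 9, 2); (1, 12, 7); (4, 5, 8); (4, 13, 1); (4, 3, 10); (4, 9, 1); (1, 12, 11); (4, 6, 15); (4, 12, 9); (4, 0, 1); (4, 9, 5); (1, 12, 12); (4, 4, 5); (4, 15, 5); (4, 2, 14); (4, 9, 13); (1, 12, 15); (4, 4, 7); (4, 15, 4); (4, 2, 15); (4, 9, 15); (1, 12, 13); (4, 4, 6); (4, 15, 7); (4, 2, 12); (4, 9, 14); (1, 12, 14); (4, 4, 4); (4, 15, 6); (4, 2, 13); (4, 9, 12)].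
Definition gensT4_152 : seq (nat * nat * nat) := [:: (0, 0, 4); (0, 1, 12); (0, 4, 0); (0, 4, 3); (0, 4, 4); (0, 4, 5); (0, 4, 10); (0, 4, 11); (0, 4, 12); (0, 4, 15); (1, 0, 4); (1, 1, 4); (1, 1, 12); (1, 2, 8); (1, 2, 12); (1, 3, 8); (1, 4, 1); (1, 4, 2); (1, 4, 5); (1, 4, 6); (1, 4, 8); (1, 4, 10); (1, 4, 13); (1, 4, 15); (1, 8, 0); (1, 8, 2); (1, 8, 4); (1, 8, 7); (1, 8, 8); (1, 8, 9); (1, 8, 12); (1, 8, 13); (1, 12, 2); (1, 12, 3); (1, 12, 4); (1, 12, 5); (1, 12, 9); (1, 12, 10); (1, 12, 12); (1, 12, 15); (4, 0, 1); (4, 0, 2); (4, 0, 3); (4, 0, 8); (4, 0, 11); (4, 0, 12); (4, 0, 14); (4, 0, 15); (4, 1, 0); (4, 1, 2); (4, 1, 4); (4, 1, 7); (4, 1, 8); (4, 1, 9); (4, 2, 4); (4, 2, 6); (4, 2, 9); (4, 2, 11); (4, 2, 13); (4, 2, 14); (4, 3, 0); (4, 3, 1); (4, 3, 3); (4, 3, 6); (4, 3, 7); (4, 3, 12); (4, 3, 13); (4, 3, 15); (4, 4, 0); (4, 4, 2); (4, 4, 5); (4, 4, 6); (4, 4, 8); (4, 4, 9); (4, 4, 15); (4, 5, 1); (4, 5, 2); (4, 5, 3); (4, 5, 9); (4, 5, 10); (4, 5, 12); (4, 5, 14); (4, 6, 0); (4, 6, 1); (4, 6, 3); (4, 6, 6);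 (4, 6, 7); (4, 6, 12); (4, 6, 13); (4, 7, 5); (4, 7, 7); (4, 7, 8); (4, 7, 10); (4, 7, 13); (4, 7, 14); (4, 7, 15); (4, 8, 0); (4, 8, 2); (4, 8, 4); (4, 8, 6); (4, 8, 12); (4, 8, 13); (4, 8, 15); (4, 9, 0); (4, 9, 1); (4, 9, 3); (4, 9, 4); (4, 9, 5); (4, 9, 8); (4, 9, 10); (4, 10, 1); (4, 10, 2); (4, 10, 3); (4, 10, 10); (4, 10, 11); (4, 10, 13); (4, 10, 14); (4, 11, 5); (4, 11, 6); (4, 11, 8); (4, 11, 11); (4, 11, 12); (4, 11, 14); (4, 11, 15); (4, 12, 4); (4, 12, 7); (4, 12, 9); (4, 12, 10); (4, 12, 14); (4, 12, 15); (4, 13, 1); (4, 13, 2); (4, 13, 3); (4, 13, 10); (4, 13, 11); (4, 13, 12); (4, 13, 13); (4, 13, 14); (4, 14, 0); (4, 14, 1); (4, 14, 3); (4, 14, 4); (4, 14, 5); (4, 14, 9); (4, 14, 11); (4, 14, 12); (4, 15, 0); (4, 15, 2); (4, 15, 5); (4, 15, 7); (4, 15, 13); (4, 15, 15)].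

Definition decT4 (k : nat) : T4 := (decF (k %/ 4), decF (k %% 4)).

Lemma decT4_surj (x : T4) : exists2 i, (i < 16)%N & decT4 i = x.
Proof.
case: x => a b; have [i hi <-] := decF_surj a; have [j hj <-] := decF_surj b.
exists (4 * i + j)%N.
  by rewrite -addnS (leq_trans (leq_add (leqnn _) hj)) // -[16%N]/(4 * 3 + 4)%N leq_add2r leq_mul2l /= -ltnS.
by rewrite /decT4 (mulnC 4) divnMDl // divn_small // addn0 modnMDl modn_small.
Qed.

Lemma bridgeT : bridge decT4 addcT4 mulcT4 0 8.
Proof. by vm_compute. Qed.

Lemma chkT4_120 : arc_checks addcT4 mulcT4 0 8 gensT4_120 8. Proof. by vm_compute. Qed.
Lemma chkT4_140 : arc_checks addcT4 mulcT4 0 8 gensT4_140 9. Proof. by vm_compute. Qed.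
Lemma chkT4_152 : arc_checks addcT4 mulcT4 0 8 gensT4_152 10. Proof. by vm_compute. Qed.

Lemma arcT4_120 : has_proj_arc T4 120 8.
Proof. exact: (arc_code bridgeT decT4_surj exist_T4 chkT4_120). Qed.
Lemma arcT4_140 : has_proj_arc T4 140 9.
Proof. exact: (arc_code bridgeT decT4_surj exist_T4 chkT4_140). Qed.
Lemma arcT4_152 : has_proj_arc T4 152 10.
Proof. exact: (arc_code bridgeT decT4_surj exist_T4 chkT4_152). Qed.

Definition addTG4 : seq (seq nat) := [:: [:: 0; 1; 2; 3; 4; 5; 6; 7; 8; 9; 10; 11; 12; 13; 14; 15]; [:: 1; 2; 3; 0; 5; 6; 7; 4; 9; 10; 11; 8; 13; 14; 15; 12]; [:: 2; 3; 0; 1; 6; 7; 4; 5; 10; 11; 8; 9; 14; 15; 12; 13]; [:: 3; 0; 1; 2; 7; 4; 5; 6; 11; 8; 9; 10; 15; 12; 13; 14]; [:: 4; 5; 6; 7; 8; 9; 10; 11; 12; 13; 14; 15; 0; 1; 2; 3]; [:: 5; 6; 7; 4; 9; 10; 11; 8; 13; 14; 15; 12; 1; 2; 3; 0]; [:: 6; 7; 4; 5; 10; 11; 8; 9; 14; 15; 12; 13; 2; 3; 0; 1]; [:: 7; 4; 5; 6; 11; 8; 9; 10; 15; 12; 13; 14; 3; 0; 1; 2]; [:: 8; 9; 10; 11; 12; 13; 14; 15; 0; 1; 2; 3; 4; 5; 6; 7]; [:: 9; 10; 11; 8; 13; 14; 15; 12; 1; 2; 3; 0; 5; 6; 7; 4];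 [:: 10; 11; 8; 9; 14; 15; 12; 13; 2; 3; 0; 1; 6; 7; 4; 5]; [:: 11; 8; 9; 10; 15; 12; 13; 14; 3; 0; 1; 2; 7; 4; 5; 6]; [:: 12; 13; 14; 15; 0; 1; 2; 3; 4; 5; 6; 7; 8; 9; 10; 11]; [:: 13; 14; 15; 12; 1; 2; 3; 0; 5; 6; 7; 4; 9; 10; 11; 8]; [:: 14; 15; 12; 13; 2; 3; 0; 1; 6; 7; 4; 5; 10; 11; 8; 9]; [:: 15; 12; 13; 14; 3; 0; 1; 2; 7; 4; 5; 6; 11; 8; 9; 10]].
Definition mulTG4 : seq (seq nat) := [:: [:: 0; 0; 0; 0; 0; 0; 0; 0; 0; 0; 0; 0; 0; 0; 0; 0]; [:: 0; 15; 10; 5; 1; 12; 11; 6; 2; 13; 8; 7; 3; 14; 9; 4]; [:: 0; 10; 0; 10; 2; 8; 2; 8; 0; 10; 0; 10; 2; 8; 2; 8]; [:: 0; 5; 10; 15; 3; 4; 9; 14; 2; 7; 8; 13; 1; 6; 11; 12]; [:: 0; 1; 2; 3; 4; 5; 6; 7; 8; 9; 10; 11; 12; 13; 14; 15]; [:: 0; 12; 8; 4; 5; 1; 13; 9; 10; 6; 2; 14; 15; 11; 7; 3]; [:: 0; 11; 2; 9; 6; 13; 4; 15; 8; 3; 10; 1; 14; 5; 12; 7]; [:: 0; 6; 8; 14; 7; 9; 15; 1; 10; 12; 2; 4; 13; 3; 5; 11]; [:: 0; 2; 0; 2; 8; 10; 8; 10; 0; 2; 0; 2; 8; 10; 8;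 10]; [:: 0; 13; 10; 7; 9; 6; 3; 12; 2; 15; 8; 5; 11; 4; 1; 14]; [:: 0; 8; 0; 8; 10; 2; 10; 2; 0; 8; 0; 8; 10; 2; 10; 2]; [:: 0; 7; 10; 13; 11; 14; 1; 4; 2; 5; 8; 15; 9; 12; 3; 6]; [:: 0; 3; 2; 1; 12; 15; 14; 13; 8; 11; 10; 9; 4; 7; 6; 5]; [:: 0; 14; 8; 6; 13; 11; 5; 3; 10; 4; 2; 12; 7; 1; 15; 9]; [:: 0; 9; 2; 11; 14; 7; 12; 5; 8; 1; 10; 3; 6; 15; 4; 13]; [:: 0; 4; 8; 12; 15; 3; 7; 11; 10; 14; 2; 6; 5; 9; 13; 1]].
Definition addcG4 (i j : nat) : nat := nth 0%N (nth [::] addTG4 i) j.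
Definition mulcG4 (i j : nat) : nat := nth 0%N (nth [::] mulTG4 i) j.
Definition gensG4_120 : seq (nat * nat * nat) := [:: (0, 0, 1); (0, 1, 0); (0, 1, 5); (0, 1, 6); (0, 1, 10); (0, 1, 12); (0, 1, 13); (0, 2, 4); (1, 0, 0); (1, 0, 1); (1, 0, 3); (1, 0, 4); (1, 0, 10); (1, 0, 12); (1, 1, 3); (1, 1, 4); (1, 1, 5); (1, 1, 11); (1, 1, 13); (1, 1, 14); (1, 2, 1); (1, 2, 4); (1, 2, 6); (1, 2, 9); (1, 2, 13); (1, 2, 15); (1, 3, 0); (1, 3, 1); (1, 3, 2); (1, 3, 3); (1, 3, 12); (1, 3, 14); (1, 4, 1); (1, 4, 2); (1, 4, 10); (1, 4, 11); (1, 4, 12); (1, 4, 14); (1, 5, 0); (1, 5, 3); (1, 5, 6); (1, 5, 8); (1, 5, 11); (1, 5, 14); (1, 6, 1); (1, 6, 2); (1, 6, 5); (1, 6, 8); (1, 6, 9); (1, 6, 15); (1, 7, 0); (1, 7, 7); (1, 7, 9); (1, 7, 10); (1, 7, 11); (1, 7, 15); (1, 8, 2); (1, 8, 3); (1, 8, 5); (1, 8, 9); (1, 8, 15); (1, 9, 2); (1, 9, 4); (1, 9, 7); (1, 9, 8); (1, 9, 12); (1, 9, 13); (1, 10, 5); (1, 10, 6); (1, 10, 13); (1, 11, 0); (1, 11, 1); (1, 11, 5); (1, 11, 7); (1, 11, 8); (1, 12, 6); (1, 12, 7); (1, 12, 8); (1, 12, 10); (1, 12, 14); (1, 12, 15);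 (1, 13, 4); (1, 13, 8); (1, 13, 10); (1, 13, 13); (1, 13, 14); (1, 13, 15); (1, 14, 5); (1, 14, 6); (1, 14, 7); (1, 14, 9); (1, 14, 11); (1, 15, 3); (1, 15, 4); (1, 15, 6); (1, 15, 7); (1, 15, 9); (1, 15, 13); (2, 0, 1); (2, 1, 3); (2, 1, 4); (2, 1, 8); (2, 1, 9); (2, 1, 10); (2, 1, 12); (2, 2, 1); (2, 4, 3); (2, 4, 4); (2, 4, 7); (2, 4, 11); (2, 4, 12); (2, 4, 15); (2, 5, 0); (2, 5, 2); (2, 5, 5); (2, 5, 6); (2, 5, 7); (2, 5, 14); (2, 8, 5); (2, 10, 5)].
Definition gensG4_140 : seq (nat * nat * nat) := [:: (0, 1, 1); (1, 2, 8); (2, 4, 5); (1, 6, 11); (1, 12, 0); (2, 5, 7); (1, 2, 0); (2, 1, 4); (1, 14, 11); (1, 4, 2); (0, 1, 2); (2, 1, 7); (1, 5, 4); (1, 8, 7); (1, 5, 8); (2, 5, 8); (2, 4, 1); (1, 13, 12); (1, 8, 13); (1, 13, 2); (0, 1, 5); (1, 7, 6); (1, 8, 15); (1, 7, 0); (2, 4, 10); (2, 5, 6); (1, 15, 14); (1, 8, 5); (1, 15, 10); (2, 1, 0); (0, 1, 6); (1, 12, 11); (1, 6, 8); (2, 1, 3); (1, 2, 10); (2, 5, 11); (1, 4, 11); (1, 14, 10); (2, 4, 6); (1, 2, 2); (0, 1, 8); (2, 5, 14); (1, 7, 12); (1, 0, 15); (1, 13, 8); (2, 5, 0); (0, 1,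 15); (1, 15, 4); (1, 0, 5); (1, 5, 2); (0, 1, 11); (1, 8, 0); (2, 1, 14); (1, 12, 1); (1, 14, 0); (2, 5, 15); (1, 8, 8); (2, 4, 7); (1, 4, 1); (1, 6, 2); (0, 1, 12); (1, 14, 1); (1, 12, 10); (2, 4, 4); (1, 8, 10); (2, 5, 3); (1, 6, 1); (1, 4, 8); (2, 1, 9); (1, 8, 2); (0, 2, 4); (1, 9, 7); (1, 9, 3); (1, 11, 14); (1, 11, 2); (1, 0, 4); (1, 6, 6); (1, 7, 1); (1, 5, 15); (1, 6, 13); (1, 0, 6); (1, 14, 12); (1, 15, 1); (1, 13, 13); (1, 14, 5); (1, 0, 7); (1, 15, 0); (2, 4, 8); (2, 1, 13); (1, 13, 6); (1, 0, 13); (1, 7, 10); (2, 1, 10); (2, 4, 3); (1, 5, 14); (1, 0, 12); (1, 12, 4); (1, 13, 1); (1, 15, 7); (1, 12, 7); (1, 0, 14); (1, 4, 14); (1, 5, 1); (1, 7, 5); (1, 4, 15); (1, 2, 4); (1, 12, 14); (1, 7, 11); (1, 7, 15); (1, 14, 15); (1, 2, 6); (1, 4, 4); (1, 15, 11); (1, 15, 13); (1, 6, 7); (1, 2, 12); (1, 6, 12); (1, 13, 11); (1, 13, 7); (1, 4, 5); (1, 2, 14); (1, 14, 6); (1, 5, 11); (1, 5, 5); (1, 12, 13); (1, 9, 1); (1, 11, 12); (1, 11, 10); (2, 10, 5); (1, 9, 15); (1, 9, 5); (1, 9, 9); (1, 11, 4); (1, 11, 0); (2, 8, 1); (1, 9,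 11); (1, 11, 6); (1, 11, 8); (2, 0, 4); (1, 9, 13)].
Definition gensG4_152 : seq (nat * nat * nat) := [:: (0, 0, 1); (0, 1, 1); (0, 1, 3); (0, 1, 4); (0, 1, 5); (0, 1, 7); (0, 1, 12); (0, 1, 15); (0, 2, 1); (0, 2, 5); (1, 0, 1); (1, 0, 2); (1, 0, 7); (1, 0, 8); (1, 0, 9); (1, 0, 12); (1, 0, 13); (1, 0, 14); (1, 1, 1); (1, 1, 2); (1, 1, 3); (1, 1, 6); (1, 1, 9); (1, 1, 10); (1, 1, 14); (1, 1, 15); (1, 2, 1); (1, 2, 3); (1, 2, 4); (1, 2, 6); (1, 2, 7); (1, 2, 8); (1, 2, 10); (1, 2, 15); (1, 3, 0); (1, 3, 2); (1, 3, 4); (1, 3, 7); (1, 3, 11); (1, 3, 13); (1, 3, 14); (1, 3, 15); (1, 4, 0); (1, 4, 1); (1, 4, 2); (1, 4, 4); (1, 4, 11); (1, 4, 12); (1, 5, 0); (1, 5, 7); (1, 5, 8); (1, 5, 9); (1, 5, 10); (1, 5, 11); (1, 5, 15); (1, 6, 1); (1, 6, 3); (1, 6, 5); (1, 6, 7); (1, 6, 8); (1, 6, 12); (1, 6, 13); (1, 6, 14); (1, 7, 1); (1, 7, 3); (1, 7, 7); (1, 7, 11); (1, 7, 12); (1, 7, 13); (1, 7, 14); (1, 8, 2); (1, 8, 3); (1, 8, 4); (1, 8, 5); (1, 8, 6); (1, 8, 9); (1, 8, 10); (1, 8, 15); (1, 9, 4); (1, 9, 6); (1, 9, 9); (1,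 9, 11); (1, 9, 13); (1, 9, 15); (1, 10, 0); (1, 10, 1); (1, 10, 3); (1, 10, 8); (1, 10, 12); (1, 10, 13); (1, 10, 14); (1, 10, 15); (1, 11, 0); (1, 11, 3); (1, 11, 7); (1, 11, 10); (1, 11, 11); (1, 11, 13); (1, 12, 0); (1, 12, 2); (1, 12, 3); (1, 12, 7); (1, 12, 8); (1, 12, 11); (1, 12, 13); (1, 12, 15); (1, 13, 0); (1, 13, 2); (1, 13, 6); (1, 13, 8); (1, 13, 12); (1, 13, 13); (1, 13, 15); (1, 14, 2); (1, 14, 4); (1, 14, 8); (1, 14, 13); (1, 14, 14); (1, 14, 15); (1, 15, 0); (1, 15, 1); (1, 15, 6); (1, 15, 9); (1, 15, 10); (1, 15, 11); (1, 15, 14); (2, 0, 5); (2, 1, 0); (2, 1, 1); (2, 1, 2); (2, 1, 5); (2, 1, 7); (2, 1, 9); (2, 1, 13); (2, 2, 1); (2, 4, 1); (2, 4, 2); (2, 4, 3); (2, 4, 7); (2, 4, 8); (2, 4, 14); (2, 4, 15); (2, 5, 0); (2, 5, 1); (2, 5, 5); (2, 5, 7); (2, 5, 8); (2, 5, 9); (2, 5, 15); (2, 8, 5); (2, 10, 1); (2, 10, 4)].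

Definition decG (k : nat) : G4 := ((k %/ 4)%:R, (k %% 4)%:R).

Lemma Z4_cases (a : 'Z_4) : exists2 i, (i < 4)%N & (i%:R : 'Z_4) = a.
Proof.
case: a => [[|[|[|[|k]]]] Hk].
- by exists 0%N => //; apply/eqP.
- by exists 1%N => //; apply/eqP.
- by exists 2%N => //; apply/eqP.
- by exists 3%N => //; apply/eqP.
- by [].
Qed.

Lemma decG_surj (x : G4) : exists2 i, (i < 16)%N & decG i = x.
Proof.
case: x => a b; have [i hi <-] := Z4_cases a; have [j hj <-] := Z4_cases b.
exists (4 * i + j)%N.
  by rewrite -addnS (leq_trans (leq_add (leqnn _) hj)) // -[16%N]/(4 * 3 + 4)%N leq_add2r leq_mul2l /= -ltnS.
by rewrite /decG (mulnC 4) divnMDl // divn_small // addn0 modnMDl modn_small.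
Qed.

Lemma G4_all1 (P : G4 -> bool) : all (fun i => P (decG i)) codes -> forall a, P a.
Proof.
move=> /allP H a; have [i hi <-] := decG_surj a; apply: H; by rewrite mem_iota.
Qed.
Lemma G4_all2 (P : G4 -> G4 -> bool) :
  all (fun i => all (fun j => P (decG i) (decG j)) codes) codes -> forall a b, P a b.
Proof.
move=> /allP H a b; have [i hi <-] := decG_surj a; have [j hj <-] := decG_surj b.
have := H i; rewrite mem_iota => /(_ hi) /allP /(_ j); rewrite mem_iota; apply; exact: hj.
Qed.
Lemma F4_all1 (P : F4 -> bool) : all (fun i => P (decF i)) (iota 0 4) -> forall a, P a.
Proof. by move=> /allP H; apply: F4_all => k hk; apply: H; rewrite mem_iota. Qed.

Lemma bridgeG : bridge decG addcG4 mulcG4 0 4.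
Proof. by vm_compute. Qed.

Definition rhoG (a : G4) : F4 := (((a.1 : nat) %% 2)%:R, ((a.2 : nat) %% 2)%:R).
Definition thG : G4 := (2%:R, 0).
Definition sigG (al : F4) : G4 := (((al.1 : nat))%:R, ((al.2 : nat))%:R).

Lemma rhoGD a b : rhoG (a + b) = rhoG a + rhoG b.
Proof.
apply/eqP; have HH := (@G4_all2 (fun a b : G4 => rhoG (a + b) == rhoG a + rhoG b) _ a b); apply: HH.
by vm_compute.
Qed.
Lemma rhoGM a b : rhoG (a * b) = rhoG a * rhoG b.
Proof.
apply/eqP; have HH := (@G4_all2 (fun a b : G4 => rhoG (a * b) == rhoG a * rhoG b) _ a b); apply: HH.
by vm_compute.
Qed.
Lemma rhoGS al : rhoG (sigG al) = al.
Proof.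
apply/eqP; have HH := (@F4_all1 (fun al => rhoG (sigG al) == al) _ al); apply: HH.
by vm_compute.
Qed.
Lemma rhoGZ a : rhoG a = 0 -> a * thG = 0.
Proof.
move=> H; apply/eqP; move: H => /eqP; apply/implyP.
have HH := (@G4_all1 (fun a : G4 => (rhoG a == 0) ==> (a * thG == 0)) _ a); apply: HH.
by vm_compute.
Qed.
Lemma rhoGT0 a : a * thG = 0 -> rhoG a = 0.
Proof.
move=> H; apply/eqP; move: H => /eqP; apply/implyP.
have HH := (@G4_all1 (fun a : G4 => (a * thG == 0) ==> (rhoG a == 0)) _ a); apply: HH.
by vm_compute.
Qed.
Lemma rhoGU a : rhoG a != 0 -> exists w, w * a = 1.
Proof.
move=> H.
have : has (fun j => decG j * a == 1) codes.
  move: H; apply/implyP.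
  have HH := (@G4_all1 (fun a : G4 => (rhoG a != 0) ==> has (fun j => decG j * a == 1) codes) _ a); apply: HH.
  by vm_compute.
by case/hasP => j _ /eqP <-; exists (decG j).
Qed.

Definition G4c : Type := G4.
HB.instance Definition _ := GRing.Zmodule.on G4c.
Lemma G4_mulC : commutative G4_mul.
Proof. by move=> [a b] [c d]; rewrite /G4_mul; apply: injective_projections => /=; ring. Qed.
HB.instance Definition _ := GRing.Zmodule_isComNzRing.Build G4c
  G4_mulA G4_mulC G4_mul1r G4_mulDl G4_one_neq0.

Lemma HidGc1 (a b c d e f : G4c) :
  (b * f - c * e) * a + (c * d - a * f) * b + (a * e - b * d) * c = 0.
Proof. by ring. Qed.
Lemma HidGc2 (a b c d e f : G4c) :
  (b * f - c * e) * d + (c * d - a * f) * e + (a * e - b * d) * f = 0.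
Proof. by ring. Qed.

Lemma HidG (p q : G4 * G4 * G4) : dot (crossR p q) p = 0 /\ dot (crossR p q) q = 0.
Proof.
case: p q => [[a b] c] [[d e] f]; rewrite /dot /crossR /=; split.
- exact: (HidGc1 a b c d e f).
- exact: (HidGc2 a b c d e f).
Qed.

Lemma exist_G4 (x y : 'rV[G4]_3) : injective (lincomb2 x y) ->
  exists u, [/\ unimodR u, dotr u x = 0 & dotr u y = 0].
Proof. exact: (exist_comm rhoGD rhoGM rhoGS rhoGZ rhoGT0 rhoGU HidG). Qed.

Lemma chkG4_120 : arc_checks addcG4 mulcG4 0 4 gensG4_120 8. Proof. by vm_compute. Qed.
Lemma chkG4_140 : arc_checks addcG4 mulcG4 0 4 gensG4_140 9. Proof. by vm_compute. Qed.
Lemma chkG4_152 : arc_checks addcG4 mulcG4 0 4 gensG4_152 10. Proof. by vm_compute. Qed.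

Lemma arcG4_120 : has_proj_arc G4 120 8.
Proof. exact: (arc_code bridgeG decG_surj exist_G4 chkG4_120). Qed.
Lemma arcG4_140 : has_proj_arc G4 140 9.
Proof. exact: (arc_code bridgeG decG_surj exist_G4 chkG4_140). Qed.
Lemma arcG4_152 : has_proj_arc G4 152 10.
Proof. exact: (arc_code bridgeG decG_surj exist_G4 chkG4_152). Qed.


Local Close Scope ring_scope.

Theorem theorem3p6 :
  [/\ [/\ has_proj_arc G4 120 8, has_proj_arc G4 140 9 & has_proj_arc G4 152 10],
      [/\ has_proj_arc S4 120 8, has_proj_arc S4 140 9 & has_proj_arc S4 152 10]
    & [/\ has_proj_arc T4 120 8, has_proj_arc T4 140 9 & has_proj_arc T4 152 10]].
Proof.
split; split.
- exact: arcG4_120.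
- exact: arcG4_140.
- exact: arcG4_152.
- exact: arcS4_120.
- exact: arcS4_140.
- exact: arcS4_152.
- exact: arcT4_120.
- exact: arcT4_140.
- exact: arcT4_152.
Qed.
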